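(* Let $\delta\in(0,1)$ and $\lambda_0\in(0,\pi)$. Let $\{U_t,t\in\mathbb{Z}\}$ be a zero-mean weakly stationary process with spectral density $f_U$ which is continuous on $[0,\pi]$ and satisfies $\inf_{\lambda\in[0,\pi]}f_U(\lambda)>0$. Let $\{X_{t,\delta},t\in\mathbb{Z}\}$ be a zero-mean weakly stationary process with spectral density $$f_\delta(\lambda)=\frac{f_U(\lambda)}{|1-(1-\delta)e^{-i(\lambda-\lambda_0)}|^{2}\,|1-(1-\delta)e^{-i(\lambda+\lambda_0)}|^{2}},\qquad \lambda\in\mathbb{R}.$$ Let $(a_{1,\delta},a_{2,\delta})$ be the unique minimizer of $(c_1,c_2)\mapsto \mathrm{E}(X_{t,\delta}-c_1X_{t-1,\delta}-c_2X_{t-2,\delta})^2$, and when $a_{2,\delta}<0$ define $\lambda_{0,\delta}=\arccos\big(a_{1,\delta}(1-a_{2,\delta})/(-4a_{2,\delta})\big)$. Then (i) $\lim_{\delta\to0}(a_{1,\delta},a_{2,\delta})=(2\cos(\lambda_0),-1)$; (ii) $\lim_{\delta\to0}\lambda_{0,\delta}=\lambda_0$. *)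

(* Defs.v *)
From HB Require Import structures.
From mathcomp Require Import all_boot all_order all_algebra.
From mathcomp Require Import all_classical all_reals all_analysis.
Unset Strict Implicit. Unset Printing Implicit Defensive.
Import Order.TTheory GRing.Theory Num.Theory.
Import numFieldNormedType.Exports.
Local Open Scope classical_set_scope.
Local Open Scope ring_scope.

(* X is a zero-mean (real, square-integrable) process indexed by Z with
   spectral density f on [-pi,pi]:  f >= 0, f integrable on [-pi,pi], and
   Cov(X_t, X_s) = E[X_t X_s] = \int_{-pi}^{pi} e^{i(t-s)l} f(l) dl
   (real part, i.e. with the kernel cos((t-s) l), since X is real).
   This makes X weakly stationary. *)
Definition has_spectral_density {R : realType} {d} {T : measurableType d}
  (P : probability T R) (X : int -> {RV P >-> R}) (f : R -> R) : Prop :=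
  [/\ (forall l : R, - pi <= l <= pi -> 0 <= f l),
      (@lebesgue_measure R).-integrable `[- pi, pi] (fun l => (f l)%:E),
      (forall t, P.-integrable setT (fun w => (X t w ^+ 2)%:E)),
      (forall t, (\int[P]_w (X t w)%:E)%E = 0%E) &
      (forall t s, (\int[P]_w (X t w * X s w)%:E)%E =
         (\int[lebesgue_measure]_(l in `[(- pi)%R, (pi : R)]) (cos ((t - s)%:~R * l) * f l)%:E)%E)].

Definition mse2 {R : realType} {d} {T : measurableType d}
  (P : probability T R) (X : int -> {RV P >-> R}) (t : int) (c1 c2 : R) : \bar R :=
  (\int[P]_w ((X t w - c1 * X (t - 1)%R w - c2 * X (t - 2)%R w) ^+ 2)%:E)%E.

Definition unique_minimizer {R : realType} {d} {T : measurableType d}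
  (P : probability T R) (X : int -> {RV P >-> R}) (a1 a2 : R) : Prop :=
  forall t : int, forall c1 c2 : R, (c1, c2) <> (a1, a2) ->
    (mse2 P X t a1 a2 < mse2 P X t c1 c2)%E.

(* |1 - r e^{-i x}|^2 = 1 - 2 r cos x + r^2 *)
Definition sqmod1 {R : realType} (r x : R) : R := 1 - 2 * r * cos x + r ^+ 2.

Definition f_delta {R : realType} (fU : R -> R) (lambda0 delta : R) (l : R) : R :=
  fU l / (sqmod1 (1 - delta) (l - lambda0) * sqmod1 (1 - delta) (l + lambda0)).

Definition lambda0_delta {R : realType} (a1 a2 : R) : R :=
  acos (a1 * (1 - a2) / (- 4 * a2)).

(* Main.v *)
Require Import Defs.
From HB Require Import structures.
From mathcomp Require Import all_boot all_order all_algebra.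
From mathcomp Require Import all_classical all_reals all_analysis.
From mathcomp Require Import ring lra.
Import Order.TTheory GRing.Theory Num.Theory.
Import numFieldNormedType.Exports.
Local Open Scope classical_set_scope.
Local Open Scope ring_scope.

Section Alg.
Context {R : realType}.

Lemma sqmod1_prod (r l a : R) :
  sqmod1 r (l - a) * sqmod1 r (l + a) =
  (1 - r) ^+ 2 * ((1 + r) ^+ 2 - 4 * r * cos l * cos a) +
  4 * r ^+ 2 * (cos l - cos a) ^+ 2.
Proof.
rewrite /sqmod1 cosB cosD.
have -> : (1 - 2 * r * (cos l * cos a + sin l * sin a) + r ^+ 2) *
  (1 - 2 * r * (cos l * cos a - sin l * sin a) + r ^+ 2) =
  (1 - 2 * r * cos l * cos a + r ^+ 2) ^+ 2 -
  4 * r ^+ 2 * (sin l ^+ 2) * (sin a ^+ 2) by ring.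
rewrite !sin2cos2; ring.
Qed.

Definition Dd (r c c0 : R) :=
  (1 - r) ^+ 2 * ((1 + r) ^+ 2 - 4 * r * c * c0) + 4 * r ^+ 2 * (c - c0) ^+ 2.

Lemma Dd_lb (r c c0 : R) : 0 <= r -> -1 <= c <= 1 -> -1 <= c0 <= 1 ->
  (1 - r) ^+ 4 <= Dd r c c0 /\ 4 * r ^+ 2 * (c - c0) ^+ 2 <= Dd r c c0.
Proof.
move=> r0 /andP[c1 c2] /andP[d1 d2].
have hcc : c * c0 <= 1 by nra.
have h0 : 0 <= r * (1 - c * c0) by apply: mulr_ge0; lra.
have h1 : (1 - r) ^+ 2 <= (1 + r) ^+ 2 - 4 * r * c * c0.
  have -> : (1 + r) ^+ 2 - 4 * r * c * c0 = (1 - r) ^+ 2 + 4 * (r * (1 - c * c0)) by ring.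
  by rewrite lerDl; apply: mulr_ge0.
have h2 : 0 <= (1 - r) ^+ 2 by exact: sqr_ge0.
have h3 : 0 <= 4 * r ^+ 2 * (c - c0) ^+ 2 by rewrite mulr_ge0 // ?sqr_ge0 // mulr_ge0 // sqr_ge0.
rewrite /Dd; split; last by rewrite lerDr mulr_ge0 // (le_trans h2 h1).
have -> : (1 - r) ^+ 4 = (1 - r) ^+ 2 * (1 - r) ^+ 2 by ring.
rewrite -[X in X <= _]addr0; apply: lerD => //; exact: ler_wpM2l.
Qed.

Lemma Dd_ub (r c c0 : R) : 0 <= r <= 1 -> -1 <= c <= 1 -> -1 <= c0 <= 1 ->
  Dd r c c0 <= 8 * (1 - r) ^+ 2 + 4 * (c - c0) ^+ 2.
Proof.
move=> /andP[r0 r1] /andP[c1 c2] /andP[d1 d2].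
have hcc : - 1 <= c * c0 by nra.
have h0 : r * (- 1 - c * c0) <= 0 by rewrite mulr_ge0_le0 //; lra.
have h1 : (1 + r) ^+ 2 - 4 * r * c * c0 <= 8.
  have -> : (1 + r) ^+ 2 - 4 * r * c * c0 = (1 + r) ^+ 2 + 4 * r + 4 * (r * (- 1 - c * c0)) by ring.
  have : (1 + r) ^+ 2 <= 4 by rewrite expr2; nra.
  lra.
have h2 : 0 <= (1 - r) ^+ 2 by exact: sqr_ge0.
have h4 : 4 * r ^+ 2 * (c - c0) ^+ 2 <= 4 * (c - c0) ^+ 2.
  apply: ler_wpM2r; first exact: sqr_ge0.
  rewrite -[X in _ <= X]mulr1; apply: ler_wpM2l => //.
  rewrite expr2; nra.
rewrite /Dd; apply: lerD => //.
by rewrite mulrC; apply: ler_wpM2r.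
Qed.

Lemma pw_bound (r c c0 u eta : R) : 1/2 <= r -> r < 1 ->
  -1 <= c <= 1 -> -1 <= c0 <= 1 -> 0 <= u -> 0 < eta ->
  `|c - c0| * (u / Dd r c c0) <= eta * (u / Dd r c c0) + u / eta.
Proof.
move=> r1 r2 hc hc0 u0 e0.
have r0 : 0 <= r by lra.
have [L1 L2] := @Dd_lb r c c0 r0 hc hc0.
have Dp : 0 < Dd r c c0.
  apply: lt_le_trans L1; apply: exprn_gt0; lra.
have uD : 0 <= u / Dd r c c0 by apply: divr_ge0 => //; exact: ltW.
have ue : 0 <= u / eta by apply: divr_ge0 => //; exact: ltW.
have [h|h] := leP `|c - c0| eta.
  rewrite -[X in X <= _]addr0; apply: lerD => //; exact: ler_wpM2r.
rewrite -[X in X <= _]add0r; apply: lerD; first by apply: mulr_ge0 => //; exact: ltW.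
rewrite mulrA ler_pdivrMr // mulrAC ler_pdivlMr //.
have hsq : (c - c0) ^+ 2 = `|c - c0| ^+ 2 by rewrite real_normK // num_real.
have H4 : `|c - c0| ^+ 2 <= Dd r c c0.
  rewrite -hsq; apply: le_trans L2; rewrite -[X in X <= _]mul1r.
  apply: ler_wpM2r; first exact: sqr_ge0.
  rewrite expr2; nra.
have ha : 0 <= `|c - c0| by [].
rewrite (mulrC `|c - c0| u) -mulrA.
apply: (@le_trans _ _ (u * (`|c - c0| * `|c - c0|))).
  by apply: ler_wpM2l => //; apply: ler_wpM2l => //; exact: ltW.
by apply: ler_wpM2l => //; rewrite -expr2.
Qed.

End Alg.
Section IntHelp.
Context {d} {T : measurableType d} {R : realType} {mu : {measure set T -> \bar R}}.
Context {D : set T} (mD : measurable D).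

Lemma iZ (k : R) (f : T -> R) : mu.-integrable D (EFin \o f) ->
  mu.-integrable D (EFin \o (fun x => k * f x)).
Proof.
move=> h; apply: (eq_integrable mD _ _ _ (integrableZl mD k h)) => x _ /=.
by rewrite EFinM.
Qed.

Lemma iD (f g : T -> R) : mu.-integrable D (EFin \o f) ->
  mu.-integrable D (EFin \o g) ->
  mu.-integrable D (EFin \o (fun x => f x + g x)).
Proof.
move=> hf hg; apply: (eq_integrable mD _ _ _ (integrableD mD hf hg)) => x _ /=.
by rewrite EFinD.
Qed.

Lemma iB (f g : T -> R) : mu.-integrable D (EFin \o f) ->
  mu.-integrable D (EFin \o g) ->
  mu.-integrable D (EFin \o (fun x => f x - g x)).
Proof.
move=> hf hg; apply: (eq_integrable mD _ _ _ (integrableB mD hf hg)) => x _ /=.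
by rewrite EFinB.
Qed.

Lemma iA (f : T -> R) : mu.-integrable D (EFin \o f) ->
  mu.-integrable D (EFin \o (fun x => `|f x|)).
Proof.
move=> hf; apply: (eq_integrable mD _ _ _ (integrable_abse hf)) => x _ /=.
by [].
Qed.

Lemma iM1 (f g : T -> R) : mu.-integrable D (EFin \o f) ->
  measurable_fun D g -> (forall x, D x -> `|g x| <= 1) ->
  mu.-integrable D (EFin \o (fun x => g x * f x)).
Proof.
move=> hf mg g1; apply: (le_integrable mD _ _ hf).
  apply/measurable_realfun.measurable_EFinP; apply: measurable_realfun.measurable_funM => //.
  by apply/measurable_realfun.measurable_EFinP; exact: measurable_int hf.
move=> x Dx /=; rewrite lee_fin normrM -[X in _ <= X]mul1r.
by apply: ler_wpM2r => //; exact: g1.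
Qed.

Lemma RintE (f : T -> R) : mu.-integrable D (EFin \o f) ->
  (Rintegral mu D f)%:E = (\int[mu]_(x in D) (f x)%:E)%E.
Proof. by move=> h; rewrite /Rintegral fineK //; exact: integrable_fin_num. Qed.

End IntHelp.

Section Trig.
Context {R : realType}.

Lemma cos_lip (a b : R) : a <= b -> `|cos b - cos a| <= b - a.
Proof.
move=> ab.
have hc : {within `[a, b], continuous (@cos R)}.
  by apply: continuous_subspaceT; exact: continuous_cos.
have [c _ ->] := @MVT_segment R cos (fun x => - sin x) a b ab
  (fun x _ => is_derive_cos x) hc.
rewrite normrM normrN (ger0_norm (x := b - a)) ?subr_ge0 //.
rewrite -[X in _ <= X]mul1r; apply: ler_wpM2r; [by rewrite subr_ge0 | exact: sin_max].
Qed.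

Lemma cos2 (x : R) : cos (2 * x) = 2 * cos x ^+ 2 - 1.
Proof. by rewrite mulr_natl cos_mulr2n mulr_natl. Qed.

Lemma cos2_bound (l a : R) : `|cos (2 * l) - cos (2 * a)| <= 4 * `|cos l - cos a|.
Proof.
rewrite !cos2.
have -> : 2 * cos l ^+ 2 - 1 - (2 * cos a ^+ 2 - 1) = 2 * ((cos l - cos a) * (cos l + cos a)) by ring.
rewrite normrM normrM (ger0_norm (x := 2)) // mulrC -mulrA.
have h : `|cos l + cos a| <= 2.
  apply: le_trans (ler_normD _ _) _.
  by have := cos_max l; have := cos_max a; lra.
have -> : (4 : R) = 2 * 2 by ring.
rewrite [leLHS]mulrC; apply: ler_wpM2r => //; apply: ler_wpM2r => //.
Qed.

Lemma cos1_bound (l a : R) : `|cos (1 * l) - cos (1 * a)| <= 4 * `|cos l - cos a|.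
Proof. rewrite !mul1r; have := normr_ge0 (cos l - cos a); lra. Qed.

End Trig.




Section Est.
Variables (R : realType) (lambda0 : R) (fU : R -> R).
Hypothesis hl : 0 < lambda0 < pi.

Definition Gk (delta k : R) := Rintegral (@lebesgue_measure R)
  `[(- pi)%R, (pi : R)] (fun l => cos (k * l) * f_delta fU lambda0 delta l).

Lemma F_eq delta l : f_delta fU lambda0 delta l =
  fU l / Dd (1 - delta) (cos l) (cos lambda0).
Proof. by rewrite /f_delta sqmod1_prod. Qed.

Lemma cos_in (x : R) : -1 <= cos x <= 1.
Proof. by rewrite cos_geN1 cos_le1. Qed.

Lemma Dd_gt0 delta l : 0 < delta <= 1 -> 0 < Dd (1 - delta) (cos l) (cos lambda0).
Proof.
move=> /andP[d0 d1].
have [L1 _] := @Dd_lb R (1 - delta) (cos l) (cos lambda0) ltac:(lra) (cos_in l) (cos_in lambda0).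
apply: lt_le_trans L1; apply: exprn_gt0; lra.
Qed.

Lemma measurable_cosk (D : set R) (k : R) : measurable_fun D (fun l : R => cos (k * l)).
Proof.
have h := measurable_realfun.continuous_measurable_fun (@continuous_cos R).
apply: measurableT_comp; first exact: h.
exact: measurable_realfun.mulrl_measurable.
Qed.

Lemma G0E delta : Gk delta 0 = Rintegral (@lebesgue_measure R)
  `[(- pi)%R, (pi : R)] (f_delta fU lambda0 delta).
Proof. by apply: eq_Rintegral => l _; rewrite mul0r cos0 mul1r. Qed.

Lemma G_lb (m delta : R) :
  0 < m -> (forall l, 0 <= l <= pi -> m <= fU l) ->
  (forall l, - pi <= l <= pi -> 0 <= fU l) ->
  0 < delta -> delta <= 1/2 -> delta <= pi - lambda0 ->
  (@lebesgue_measure R).-integrable `[(- pi)%R, (pi : R)]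
     (fun l => (f_delta fU lambda0 delta l)%:E) ->
  m / (12 * delta) <= Gk delta 0.
Proof.
move=> m0 hm hU0 d0 d12 dpi Fint.
have pi0 : 0 < pi :> R := pi_gt0 R.
move: hl => /andP[l0 lpi].
set F := f_delta fU lambda0 delta.
have mI : measurable (`[(- pi)%R, (pi : R)]%classic) := measurable_itv _.
have mFE := measurable_int _ Fint.
have F0 : forall l, (`[(- pi)%R, (pi : R)]%classic) l -> 0 <= F l.
  move=> l; rewrite /= in_itv /= => Il.
  rewrite /F F_eq; apply: divr_ge0; first exact: hU0.
  apply: ltW; apply: Dd_gt0; lra.
have mJ : measurable (`[lambda0, lambda0 + delta]%classic) := measurable_itv _.
have JI : (`[lambda0, lambda0 + delta]%classic) `<=` `[(- pi)%R, (pi : R)].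
  move=> l; rewrite /= !in_itv /= => /andP[l1 l2].
  apply/andP; split; lra.
set c := m / (12 * delta ^+ 2).
have cF : forall l, (`[lambda0, lambda0 + delta]%classic) l -> c <= F l.
  move=> l; rewrite /= in_itv /= => /andP[l1 l2].
  have hd := cos_lip _ _ l1.
  have Dp := Dd_gt0 delta l (ltac:(lra) : 0 < delta <= 1).
  have Dub := @Dd_ub R (1 - delta) (cos l) (cos lambda0) ltac:(lra) (cos_in l) (cos_in lambda0).
  have h1 : (cos l - cos lambda0) ^+ 2 <= delta ^+ 2.
    have ha : `|cos l - cos lambda0| <= delta by lra.
    rewrite -real_normK ?num_real // !expr2; apply: ler_pM => //.
  have h2 : Dd (1 - delta) (cos l) (cos lambda0) <= 12 * delta ^+ 2.
    apply: le_trans Dub _.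
    have -> : 1 - (1 - delta) = delta by ring.
    lra.
  rewrite /c /F F_eq.
  apply: (@le_trans _ _ (m / Dd (1 - delta) (cos l) (cos lambda0))).
    apply: ler_wpM2l; first exact: ltW.
    rewrite lef_pV2 ?posrE //; apply: mulr_gt0 => //; exact: exprn_gt0.
  apply: ler_wpM2r; first by rewrite invr_ge0 ltW.
  apply: hm; lra.
have key : ((c * delta)%:E <= (Gk delta 0)%:E)%E.
  rewrite G0E RintE //.
  have F0' : forall x, (`[(- pi)%R, (pi : R)]%classic) x -> (0 <= (F x)%:E)%E.
    by move=> x Ix; rewrite lee_fin; exact: F0.
  have H := ge0_subset_integral (@lebesgue_measure R) mJ mI mFE F0' JI.
  apply: (le_trans _ H).
  have -> : (c * delta)%:E = (\int[@lebesgue_measure R]_(x in (`[lambda0, (lambda0 + delta)%R]%classic)) (cst c%:E x))%E.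
    rewrite integral_cst // EFinM; congr (_ * _)%E; apply: esym; etransitivity; first exact: (@lebesgue_measure_itv R `[lambda0, (lambda0 + delta)%R]).
    by rewrite /= lte_fin ltrDl d0 -EFinB; have -> : lambda0 + delta - lambda0 = delta by ring.
  apply: ge0_le_integral => //.
  - by move=> x _; rewrite lee_fin /c; apply: divr_ge0; [exact: ltW| apply: mulr_ge0 => //; exact: sqr_ge0].
  - exact: measurable_funS mFE.
rewrite lee_fin in key; apply: le_trans key.
rewrite /c le_eqVlt; apply/orP; left; apply/eqP; field.
by rewrite gt_eqF.
Qed.

Lemma G_diff (delta eta k ck : R) :
  (forall l, - pi <= l <= pi -> 0 <= fU l) ->
  (@lebesgue_measure R).-integrable `[(- pi)%R, (pi : R)] (fun l => (fU l)%:E) ->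
  0 < delta -> delta <= 1/2 -> 0 < eta ->
  (forall l, `|cos (k * l) - ck| <= 4 * `|cos l - cos lambda0|) ->
  (@lebesgue_measure R).-integrable `[(- pi)%R, (pi : R)]
     (fun l => (f_delta fU lambda0 delta l)%:E) ->
  `|Gk delta k - ck * Gk delta 0| <=
    4 * (eta * Gk delta 0 + Rintegral (@lebesgue_measure R) `[(- pi)%R, (pi : R)] fU / eta).
Proof.
move=> hU0 Uint d0 d12 e0 hk Fint.
set F := f_delta fU lambda0 delta.
have mI := @measurable_itv R `[(- pi)%R, (pi : R)].
have iF : (@lebesgue_measure R).-integrable `[(- pi)%R, (pi : R)] (EFin \o F) := Fint.
have icF := @iM1 _ _ _ (@lebesgue_measure R) _ mI _ _ iF (measurable_cosk _ k) (fun x _ => cos_max _).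
have iZF := @iZ _ _ _ (@lebesgue_measure R) _ mI ck _ iF.
have iDiff := @iB _ _ _ (@lebesgue_measure R) _ mI _ _ icF iZF.
have iU : (@lebesgue_measure R).-integrable `[(- pi)%R, (pi : R)] (EFin \o fU) := Uint.
have iU' := @iZ _ _ _ (@lebesgue_measure R) _ mI eta^-1 _ iU.
have iBound := @iZ _ _ _ (@lebesgue_measure R) _ mI 4 _ (@iD _ _ _ (@lebesgue_measure R) _ mI _ _ (@iZ _ _ _ (@lebesgue_measure R) _ mI eta _ iF) iU').
have -> : Gk delta k - ck * Gk delta 0 = Rintegral (@lebesgue_measure R) `[(- pi)%R, (pi : R)]
    (fun l => cos (k * l) * F l - ck * F l).
  by rewrite G0E -RintegralZl // -RintegralB.
apply: le_trans (@le_normr_Rintegral _ _ _ (@lebesgue_measure R) _ _ mI iDiff) _.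
apply: (@le_trans _ _ (Rintegral (@lebesgue_measure R) `[(- pi)%R, (pi : R)]
   (fun l => 4 * (eta * F l + eta^-1 * fU l)))).
  apply: le_Rintegral => //; first exact: (@iA _ _ _ (@lebesgue_measure R) _ mI _ iDiff).
  move=> l; rewrite /= in_itv /= => Il.
  have Dp := Dd_gt0 delta l (ltac:(lra) : 0 < delta <= 1).
  have F0 : 0 <= F l by rewrite /F F_eq; apply: divr_ge0; [exact: hU0| exact: ltW].
  rewrite -mulrBl normrM (ger0_norm F0).
  apply: (@le_trans _ _ (4 * `|cos l - cos lambda0| * F l)).
    by apply: ler_wpM2r => //; exact: hk.
  rewrite -mulrA; apply: ler_wpM2l => //.
  rewrite [eta^-1 * _]mulrC /F F_eq; apply: pw_bound => //; try lra; try exact: cos_in.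
  exact: hU0.
have E : Rintegral (@lebesgue_measure R) `[(- pi)%R, (pi : R)] (fun x => eta * F x + eta^-1 * fU x) =
  Rintegral (@lebesgue_measure R) `[(- pi)%R, (pi : R)] (fun x => eta * F x) +
  Rintegral (@lebesgue_measure R) `[(- pi)%R, (pi : R)] (fun x => eta^-1 * fU x) :=
  (@RintegralD _ _ _ (@lebesgue_measure R) _ (fun x => eta * F x) (fun x => eta^-1 * fU x) mI
  (@iZ _ _ _ (@lebesgue_measure R) _ mI eta _ iF) iU').
rewrite le_eqVlt; apply/orP; left; apply/eqP; rewrite RintegralZl //; f_equal.
etransitivity; first exact: E.
rewrite RintegralZl // RintegralZl // G0E [eta^-1 * _]mulrC.
  by [].
exact: (@iD _ _ _ (@lebesgue_measure R) _ mI _ _ (@iZ _ _ _ (@lebesgue_measure R) _ mI eta _ iF) iU').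
Qed.

End Est.


Section Lin.
Context {d} {T : measurableType d} {R : realType} {mu : {measure set T -> \bar R}}.
Context {D : set T} (mD : measurable D).

Lemma iLin3 (h1 h2 h3 : T -> R) (a1 a2 a3 : R) :
  mu.-integrable D (EFin \o h1) -> mu.-integrable D (EFin \o h2) ->
  mu.-integrable D (EFin \o h3) ->
  mu.-integrable D (EFin \o (fun x => a1 * h1 x + a2 * h2 x + a3 * h3 x)).
Proof.
move=> i1 i2 i3.
exact: (iD mD _ _ (iD mD _ _ (iZ mD a1 _ i1) (iZ mD a2 _ i2)) (iZ mD a3 _ i3)).
Qed.

Lemma Rint_lin3 (h1 h2 h3 : T -> R) (a1 a2 a3 : R) :
  mu.-integrable D (EFin \o h1) -> mu.-integrable D (EFin \o h2) ->
  mu.-integrable D (EFin \o h3) ->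
  Rintegral mu D (fun x => a1 * h1 x + a2 * h2 x + a3 * h3 x) =
  a1 * Rintegral mu D h1 + a2 * Rintegral mu D h2 + a3 * Rintegral mu D h3.
Proof.
move=> i1 i2 i3.
have E1 : Rintegral mu D (fun x => a1 * h1 x + a2 * h2 x + a3 * h3 x) =
  Rintegral mu D (fun x => a1 * h1 x + a2 * h2 x) + Rintegral mu D (fun x => a3 * h3 x) :=
  RintegralD mD (iD mD _ _ (iZ mD a1 _ i1) (iZ mD a2 _ i2)) (iZ mD a3 _ i3).
have E2 : Rintegral mu D (fun x => a1 * h1 x + a2 * h2 x) =
  Rintegral mu D (fun x => a1 * h1 x) + Rintegral mu D (fun x => a2 * h2 x) :=
  RintegralD mD (iZ mD a1 _ i1) (iZ mD a2 _ i2).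
by rewrite E1 E2 !RintegralZl.
Qed.

Lemma iprod (f g : T -> R) : measurable_fun D f -> measurable_fun D g ->
  mu.-integrable D (EFin \o (fun x => f x ^+ 2)) ->
  mu.-integrable D (EFin \o (fun x => g x ^+ 2)) ->
  mu.-integrable D (EFin \o (fun x => f x * g x)).
Proof.
move=> mf mg i1 i2.
apply: (le_integrable mD _ _ (iD mD _ _ i1 i2)).
  by apply/measurable_realfun.measurable_EFinP; exact: measurable_realfun.measurable_funM.
move=> x Dx /=; rewrite lee_fin normrM.
have h1 : 0 <= f x ^+ 2 + g x ^+ 2 by rewrite addr_ge0 // sqr_ge0.
rewrite (ger0_norm h1) -(real_normK (num_real (f x))) -(real_normK (num_real (g x))).
have := sqr_ge0 (`|f x| - `|g x|).
have := normr_ge0 (f x); have := normr_ge0 (g x).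
nra.
Qed.

Lemma mse_expand (Y0 Y1 Y2 : T -> R) (c1 c2 : R) :
  measurable_fun D Y0 -> measurable_fun D Y1 -> measurable_fun D Y2 ->
  mu.-integrable D (EFin \o (fun x => Y0 x ^+ 2)) ->
  mu.-integrable D (EFin \o (fun x => Y1 x ^+ 2)) ->
  mu.-integrable D (EFin \o (fun x => Y2 x ^+ 2)) ->
  (\int[mu]_(x in D) ((Y0 x - c1 * Y1 x - c2 * Y2 x) ^+ 2)%:E)%E =
  (1 * (1 * Rintegral mu D (fun x => Y0 x * Y0 x) + (- c1) * Rintegral mu D (fun x => Y0 x * Y1 x)
          + (- c2) * Rintegral mu D (fun x => Y0 x * Y2 x))
   + (- c1) * (1 * Rintegral mu D (fun x => Y1 x * Y0 x) + (- c1) * Rintegral mu D (fun x => Y1 x * Y1 x)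
          + (- c2) * Rintegral mu D (fun x => Y1 x * Y2 x))
   + (- c2) * (1 * Rintegral mu D (fun x => Y2 x * Y0 x) + (- c1) * Rintegral mu D (fun x => Y2 x * Y1 x)
          + (- c2) * Rintegral mu D (fun x => Y2 x * Y2 x)))%:E.
Proof.
move=> m0 m1 m2 s0 s1 s2.
have iL : forall Y : T -> R, measurable_fun D Y -> mu.-integrable D (EFin \o (fun x => Y x ^+ 2)) ->
  mu.-integrable D (EFin \o (fun x => 1 * (Y x * Y0 x) + (- c1) * (Y x * Y1 x) + (- c2) * (Y x * Y2 x))).
  move=> Y mY sY; apply: iLin3; exact: iprod.
have RL : forall Y : T -> R, measurable_fun D Y -> mu.-integrable D (EFin \o (fun x => Y x ^+ 2)) ->
  Rintegral mu D (fun x => 1 * (Y x * Y0 x) + (- c1) * (Y x * Y1 x) + (- c2) * (Y x * Y2 x)) =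
  1 * Rintegral mu D (fun x => Y x * Y0 x) + (- c1) * Rintegral mu D (fun x => Y x * Y1 x)
          + (- c2) * Rintegral mu D (fun x => Y x * Y2 x).
  move=> Y mY sY; apply: Rint_lin3; exact: iprod.
have iZ2 := iLin3 _ _ _ 1 (- c1) (- c2) (iL _ m0 s0) (iL _ m1 s1) (iL _ m2 s2).
rewrite -(RL _ m0 s0) -(RL _ m1 s1) -(RL _ m2 s2).
rewrite -(Rint_lin3 _ _ _ 1 (- c1) (- c2) (iL _ m0 s0) (iL _ m1 s1) (iL _ m2 s2)).
rewrite (RintE mD _ iZ2).
by apply: eq_integral => x _; congr EFin; ring.
Qed.

End Lin.


Arguments Gk {R}.

Lemma lin_zero {R : realType} (L q : R) :
  (forall s, s != 0 -> 0 < s * L + s ^+ 2 * q) -> L = 0.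
Proof.
move=> h; apply/eqP; apply: contraT => hL.
set t := (`|q| + 1)^-1.
have t0 : 0 < t by rewrite invr_gt0; have := normr_ge0 q; lra.
have tq : t * q < 1.
  rewrite /t mulrC ltr_pdivrMr; last by have := normr_ge0 q; lra.
  have := ler_norm q; lra.
have hs : - (t * L) != 0 by rewrite oppr_eq0 mulf_neq0 // gt_eqF.
have := h _ hs.
have -> : - (t * L) * L + (- (t * L)) ^+ 2 * q = (t * L ^+ 2) * (t * q - 1) by ring.
rewrite pmulr_rgt0; first lra.
by rewrite mulr_gt0 // exprn_even_gt0.
Qed.

Lemma GkN {R : realType} lambda0 fU delta (k : R) : Gk lambda0 fU delta (- k) = Gk lambda0 fU delta k.
Proof. by apply: eq_Rintegral => l _; rewrite mulNr cosN. Qed.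

Lemma normal_eqs {R : realType} (lambda0 : R) fU delta (a1 a2 : R) :
  (exists (d : measure_display) (T : measurableType d)
            (P : probability T R) (X : int -> {RV P >-> R}),
       has_spectral_density P X (f_delta fU lambda0 delta) /\
       unique_minimizer P X a1 a2) ->
  [/\ (@lebesgue_measure R).-integrable `[(- pi)%R, (pi : R)]
     (fun l => (f_delta fU lambda0 delta l)%:E),
   a1 * Gk lambda0 fU delta 0 + a2 * Gk lambda0 fU delta 1 = Gk lambda0 fU delta 1 &
   a1 * Gk lambda0 fU delta 1 + a2 * Gk lambda0 fU delta 0 = Gk lambda0 fU delta 2].
Proof.
move=> [dd [T [P [X [[hF0 hFi hsq _ hcov] hmin]]]]].
have mI := @measurable_itv R `[(- pi)%R, (pi : R)].
have iF : (@lebesgue_measure R).-integrable `[(- pi)%R, (pi : R)]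
   (EFin \o f_delta fU lambda0 delta) := hFi.
have icF : forall k : R, (@lebesgue_measure R).-integrable `[(- pi)%R, (pi : R)]
   (EFin \o (fun l => cos (k * l) * f_delta fU lambda0 delta l)).
  move=> k; exact: (@iM1 _ _ _ (@lebesgue_measure R) _ mI _ _ iF (measurable_cosk _ _ k) (fun x _ => cos_max _)).
have mX : forall t, measurable_fun setT (X t) by move=> t; exact: measurable_funPT.
have HP : forall ti tj : int, Rintegral P setT (fun w => X ti w * X tj w) =
    Gk lambda0 fU delta (ti - tj)%:~R.
  move=> ti tj; apply: EFin_inj.
  rewrite (RintE measurableT _ (iprod measurableT _ _ (mX ti) (mX tj) (hsq ti) (hsq tj))).
  by rewrite hcov /Gk (@RintE _ _ _ (@lebesgue_measure R) _ mI _ (icF _)).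
set G0 := Gk lambda0 fU delta 0.
set G1 := Gk lambda0 fU delta 1.
set G2 := Gk lambda0 fU delta 2.
have HQ : forall c1 c2, mse2 P X 0 c1 c2 =
  (G0 - 2 * c1 * G1 - 2 * c2 * G2 + c1 ^+ 2 * G0 + 2 * c1 * c2 * G1 + c2 ^+ 2 * G0)%:E.
  move=> c1 c2; rewrite /mse2.
  rewrite (mse_expand measurableT _ _ _ c1 c2 (mX _) (mX _) (mX _) (hsq _) (hsq _) (hsq _)).
  rewrite !HP.
  have z0 : ((0 - 0 : int)%:~R : R) = 0 by [].
  have z1 : ((0 - (0 - 1) : int)%:~R : R) = 1 by [].
  have z2 : ((0 - (0 - 2) : int)%:~R : R) = 2 by [].
  have z3 : ((0 - 1 - 0 : int)%:~R : R) = - 1 by [].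
  have z4 : ((0 - 1 - (0 - 1) : int)%:~R : R) = 0 by [].
  have z5 : ((0 - 1 - (0 - 2) : int)%:~R : R) = 1 by [].
  have z6 : ((0 - 2 - 0 : int)%:~R : R) = - 2 by [].
  have z7 : ((0 - 2 - (0 - 1) : int)%:~R : R) = - 1 by [].
  have z8 : ((0 - 2 - (0 - 2) : int)%:~R : R) = 0 by [].
  rewrite ?z0 ?z1 ?z2 ?z3 ?z4 ?z5 ?z6 ?z7 ?z8 !GkN -/G0 -/G1 -/G2.
  congr EFin; ring.
have h1 : forall s, s != 0 -> 0 < s * (2 * a1 * G0 + 2 * a2 * G1 - 2 * G1) + s ^+ 2 * G0.
  move=> s s0; have := hmin 0 (a1 + s) a2.
  have ne : (a1 + s, a2) <> (a1, a2).
    by case => /eqP; rewrite -subr_eq0 addrAC subrr add0r (negbTE s0).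
  move=> /(_ ne); rewrite !HQ lte_fin -subr_gt0 => H.
  by apply: (lt_le_trans H); rewrite le_eqVlt; apply/orP; left; apply/eqP; ring.
have h2 : forall s, s != 0 -> 0 < s * (2 * a2 * G0 + 2 * a1 * G1 - 2 * G2) + s ^+ 2 * G0.
  move=> s s0; have := hmin 0 a1 (a2 + s).
  have ne : (a1, a2 + s) <> (a1, a2).
    by case => /eqP; rewrite -subr_eq0 addrAC subrr add0r (negbTE s0).
  move=> /(_ ne); rewrite !HQ lte_fin -subr_gt0 => H.
  by apply: (lt_le_trans H); rewrite le_eqVlt; apply/orP; left; apply/eqP; ring.
have L1 := lin_zero _ _ h1; have L2 := lin_zero _ _ h2.
split => //.
- have : 2 * (a1 * G0 + a2 * G1 - G1) = 0 by rewrite -L1; ring.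
  by move/eqP; rewrite mulf_eq0 pnatr_eq0 /= subr_eq0 => /eqP.
- have : 2 * (a1 * G1 + a2 * G0 - G2) = 0 by rewrite -L2; ring.
  by move/eqP; rewrite mulf_eq0 pnatr_eq0 /= subr_eq0 => /eqP.
Qed.




Lemma rho_close {R : realType} (lambda0 : R) fU (m IU k ck eps delta : R) :
  0 < lambda0 < pi -> 0 < m ->
  (forall l, 0 <= l <= pi -> m <= fU l) ->
  (forall l, - pi <= l <= pi -> 0 <= fU l) ->
  (@lebesgue_measure R).-integrable `[(- pi)%R, (pi : R)] (fun l => (fU l)%:E) ->
  IU = Rintegral (@lebesgue_measure R) `[(- pi)%R, (pi : R)] fU ->
  0 <= IU ->
  (forall l, `|cos (k * l) - ck| <= 4 * `|cos l - cos lambda0|) ->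
  (@lebesgue_measure R).-integrable `[(- pi)%R, (pi : R)]
     (fun l => (f_delta fU lambda0 delta l)%:E) ->
  0 < eps -> 0 < delta -> delta <= 1/2 -> delta <= pi - lambda0 ->
  delta < eps * (eps / 8) * m / (96 * (IU + 1)) ->
  `|ck - Gk lambda0 fU delta k / Gk lambda0 fU delta 0| < eps.
Proof.
move=> hl m0 hm hU0 Uint IUE IU0 hk Fint e0 d0 d12 dpi db.
set eta := eps / 8.
have eta0 : 0 < eta by rewrite /eta divr_gt0.
have Glb := G_lb R lambda0 fU hl m delta m0 hm hU0 d0 d12 dpi Fint.
have Gd := G_diff R lambda0 fU delta eta k ck hU0 Uint d0 d12 eta0 hk Fint.
rewrite -IUE in Gd.
set g := Gk lambda0 fU delta 0 in Glb Gd *.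
set gk := Gk lambda0 fU delta k in Gd *.
have mdl : 0 < m / (12 * delta) by rewrite divr_gt0 // mulr_gt0.
have g0 : 0 < g by apply: lt_le_trans Glb.
have h2 : m <= 12 * delta * g.
  by move: Glb; rewrite ler_pdivrMr ?mulr_gt0 // mulrC.
have h1 : delta * (96 * (IU + 1)) < eps * eta * m.
  by move: db; rewrite ltr_pdivlMr // mulr_gt0 //; lra.
have h3 : 8 * IU < eps * eta * g.
  have : 96 * IU * delta < 12 * delta * (eps * eta * g).
    apply: (@lt_le_trans _ _ (eps * eta * m)).
      apply: le_lt_trans h1.
      have -> : delta * (96 * (IU + 1)) = 96 * IU * delta + 96 * delta by ring.
      by rewrite lerDl mulr_ge0 // ltW.
    have -> : 12 * delta * (eps * eta * g) = eps * eta * (12 * delta * g) by ring.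
    by apply: ler_wpM2l => //; rewrite mulr_ge0 // ltW.
  have -> : 12 * delta * (eps * eta * g) = 96 * delta * (eps * eta * g / 8) by field.
  have -> : 96 * IU * delta = 96 * delta * IU by ring.
  rewrite ltr_pM2l ?mulr_gt0 //.
  by rewrite ltr_pdivlMr // mulrC.
rewrite distrC.
have -> : gk / g - ck = (gk - ck * g) / g by field; rewrite gt_eqF.
rewrite normrM (gtr0_norm (x := g^-1)) ?invr_gt0 // ltr_pdivrMr //.
apply: le_lt_trans Gd _.
have h4 : 4 * (IU / eta) < eps * g / 2.
  rewrite ltr_pdivlMr //.
  have -> : 4 * (IU / eta) * 2 = (8 * IU) / eta by field; rewrite gt_eqF.
  by rewrite ltr_pdivrMr // mulrAC.
have e4 : 4 * eta = eps / 2 by rewrite /eta; field.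
have e5 : 4 * eta * g = eps * g / 2 by rewrite e4 mulrAC.
lra.
Qed.

Lemma rho_cvg {R : realType} (lambda0 : R) fU (m : R) (a1 a2 : R -> R) (k ck : R) :
  0 < lambda0 < pi -> 0 < m ->
  (forall l, 0 <= l <= pi -> m <= fU l) ->
  (forall l, - pi <= l <= pi -> 0 <= fU l) ->
  (@lebesgue_measure R).-integrable `[(- pi)%R, (pi : R)] (fun l => (fU l)%:E) ->
  (forall delta : R, 0 < delta < 1 ->
     exists (d : measure_display) (T : measurableType d)
            (P : probability T R) (X : int -> {RV P >-> R}),
       has_spectral_density P X (f_delta fU lambda0 delta) /\
       unique_minimizer P X (a1 delta) (a2 delta)) ->
  (forall l, `|cos (k * l) - ck| <= 4 * `|cos l - cos lambda0|) ->
  Gk lambda0 fU x k / Gk lambda0 fU x 0 @[x --> 0^'+] --> ck.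
Proof.
move=> hl m0 hm hU0 hUi hX hk.
set IU := Rintegral (@lebesgue_measure R) `[(- pi)%R, (pi : R)] fU.
have IU0 : 0 <= IU by apply: Rintegral_ge0 => l; rewrite /= in_itv /=; exact: hU0.
have pil : 0 < pi - lambda0 by move: hl => /andP[]; lra.
apply/cvgrPdist_lt => e e0.
set b := e * (e / 8) * m / (96 * (IU + 1)).
have b0 : 0 < b by rewrite /b divr_gt0 ?mulr_gt0 //; lra.
near=> x.
have x0 : 0 < x by near: x; exact: nbhs_right_gt.
have x1 : x < 1/2 by near: x; apply: nbhs_right_lt; lra.
have x2 : x < pi - lambda0 by near: x; exact: nbhs_right_lt.
have x3 : x < b by near: x; exact: nbhs_right_lt.
have [Fint _ _] := normal_eqs lambda0 fU x (a1 x) (a2 x) (hX x ltac:(lra)).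
apply: (rho_close lambda0 fU m IU) => //; lra.
Unshelve. all: by end_near.
Qed.

Lemma sq_lt1 {R : realFieldType} (c : R) : c * c < 1 -> -1 < c < 1.
Proof.
move=> h.
have h1 : -1 < c.
  rewrite ltNge; apply/negP => hc.
  have : 0 <= (- 1 - c) * (1 - c) by apply: mulr_ge0; lra.
  lra.
have h2 : c < 1.
  rewrite ltNge; apply/negP => hc.
  have : 0 <= (c - 1) * (c + 1) by apply: mulr_ge0; lra.
  lra.
by rewrite h1 h2.
Qed.

Theorem lemma2 (R : realType) (lambda0 : R) (fU : R -> R)
  (a1 a2 : R -> R) :
  0 < lambda0 < pi ->
  {within `[0, pi], continuous fU} ->
  (exists2 m : R, 0 < m & forall l : R, 0 <= l <= pi -> m <= fU l) ->
  (exists (dU : measure_display) (TU : measurableType dU)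
          (PU : probability TU R) (U : int -> {RV PU >-> R}),
      has_spectral_density PU U fU) ->
  (forall delta : R, 0 < delta < 1 ->
     exists (d : measure_display) (T : measurableType d)
            (P : probability T R) (X : int -> {RV P >-> R}),
       has_spectral_density P X (f_delta fU lambda0 delta) /\
       unique_minimizer P X (a1 delta) (a2 delta)) ->
  [/\ a1 x @[x --> 0^'+] --> (2 * cos lambda0 : R),
      a2 x @[x --> 0^'+] --> (-1 : R),
      (\forall x \near 0^'+, a2 x < 0) &
      lambda0_delta (a1 x) (a2 x) @[x --> 0^'+] --> lambda0].
Proof.
move=> hl _ [m m0 hm] [dU [TU [PU [U [hU0 hUi _ _ _]]]]] hX.
have pil : 0 < pi - lambda0 by move: hl => /andP[]; lra.
set c0 := cos lambda0.
set c2 := cos (2 * lambda0).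
have hc2 : c2 = 2 * c0 ^+ 2 - 1 by rewrite /c2 cos2.
have c0b : -1 < c0 < 1.
  have s0 : 0 < sin lambda0 by apply: sin_gt0_pi.
  have hs : c0 ^+ 2 = 1 - sin lambda0 ^+ 2 by rewrite /c0 cos2sin2.
  have : c0 ^+ 2 < 1 by rewrite hs; have := exprn_gt0 2 s0; lra.
  by rewrite expr2 => h; apply: sq_lt1.
have nz : 1 - c0 * c0 != 0.
  apply/eqP => h; move: c0b => /andP[h1 h2].
  have : 0 < (1 - c0) * (1 + c0) by apply: mulr_gt0; lra.
  lra.
set p := fun x => Gk lambda0 fU x 1 / Gk lambda0 fU x 0.
set q := fun x => Gk lambda0 fU x 2 / Gk lambda0 fU x 0.
have hp : p x @[x --> 0^'+] --> c0.
  have := rho_cvg lambda0 fU m a1 a2 1 (cos (1 * lambda0)) hl m0 hm hU0 hUi hX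
    (fun l => cos1_bound l lambda0).
  by rewrite mul1r.
have hq : q x @[x --> 0^'+] --> c2 :=
  rho_cvg lambda0 fU m a1 a2 2 (cos (2 * lambda0)) hl m0 hm hU0 hUi hX
    (fun l => cos2_bound l lambda0).
have pn : \forall x \near 0^'+, `|p x| < 1.
  move/cvgrPdist_lt : hp => /(_ (1 - `|c0|)).
  have : 0 < 1 - `|c0| by move: c0b => /andP[]; case: (ltrP 0 c0) => hc; [rewrite gtr0_norm|rewrite ler0_norm]; lra.
  move=> h /(_ h); apply: filterS => x hx.
  have := lerB_dist (p x) c0; rewrite distrC.
  lra.
have eqs : \forall x \near 0^'+,
    a1 x = p x * (1 - q x) / (1 - p x * p x) /\
    a2 x = (q x - p x * p x) / (1 - p x * p x).
  near=> x.
  have x0 : 0 < x by near: x; exact: nbhs_right_gt.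
  have x1 : x < 1/2 by near: x; apply: nbhs_right_lt; lra.
  have x2 : x < pi - lambda0 by near: x; exact: nbhs_right_lt.
  have px : `|p x| < 1 by near: x; exact: pn.
  have [Fint E1 E2] := normal_eqs lambda0 fU x (a1 x) (a2 x) (hX x ltac:(lra)).
  have Glb := G_lb R lambda0 fU hl m x m0 hm hU0 x0 ltac:(lra) ltac:(lra) Fint.
  have G0 : 0 < Gk lambda0 fU x 0.
    by apply: lt_le_trans Glb; rewrite divr_gt0 // mulr_gt0.
  have G0n : Gk lambda0 fU x 0 != 0 by rewrite gt_eqF.
  have F1 : a1 x + a2 x * p x = p x.
    by rewrite /p -[in RHS]E1; field.
  have F2 : a1 x * p x + a2 x = q x.
    by rewrite /p /q -[in RHS]E2; field.
  have nzx : 1 - p x * p x != 0.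
    have hpp : p x * p x < 1.
      rewrite -expr2 -real_normK ?num_real // expr2.
      apply: (@le_lt_trans _ _ (`|p x| * 1)); last by rewrite mulr1.
      by apply: ler_wpM2l => //; exact: ltW.
    by rewrite subr_eq0 eq_sym lt_eqF.
  split.
  - have : a1 x * (1 - p x * p x) = p x * (1 - q x).
      have -> : a1 x * (1 - p x * p x) = (a1 x + a2 x * p x) - p x * (a1 x * p x + a2 x) by ring.
      by rewrite F1 F2; ring.
    by move=> <-; rewrite mulfK.
  - have : a2 x * (1 - p x * p x) = q x - p x * p x.
      have -> : a2 x * (1 - p x * p x) = (a1 x * p x + a2 x) - p x * (a1 x + a2 x * p x) by ring.
      by rewrite F1 F2.
    by move=> <-; rewrite mulfK.
have ha1 : a1 x @[x --> 0^'+] --> (2 * cos lambda0 : R).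
  have e1 : \forall x \near 0^'+, p x * (1 - q x) / (1 - p x * p x) = a1 x.
    by apply: filterS eqs => x [-> _].
  apply: cvg_trans (near_eq_cvg e1) _.
  have -> : 2 * cos lambda0 = c0 * (1 - c2) / (1 - c0 * c0).
    by rewrite hc2 -/c0; field.
  apply: cvgM.
    apply: cvgM => //; apply: cvgB => //; exact: cvg_cst.
  apply: cvgV => //.
  apply: cvgB; first exact: cvg_cst.
  exact: cvgM.
have ha2 : a2 x @[x --> 0^'+] --> (-1 : R).
  have e2 : \forall x \near 0^'+, (q x - p x * p x) / (1 - p x * p x) = a2 x.
    by apply: filterS eqs => x [_ ->].
  apply: cvg_trans (near_eq_cvg e2) _.
  have -> : (-1 : R) = (c2 - c0 * c0) / (1 - c0 * c0).
    by rewrite hc2 -/c0; field.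
  apply: cvgM.
    apply: cvgB => //; exact: cvgM.
  apply: cvgV => //.
  apply: cvgB; first exact: cvg_cst.
  exact: cvgM.
split => //.
- by apply: (cvgr_lt _ ha2); lra.
rewrite /lambda0_delta.
have -> : lambda0 = acos c0.
  by rewrite /c0 cosK // in_itv /=; move: hl => /andP[] *; apply/andP; split; apply: ltW.
have hin : a1 x * (1 - a2 x) / (- 4 * a2 x) @[x --> 0^'+] --> c0.
  have -> : c0 = 2 * cos lambda0 * (1 - -1) / (- 4 * -1) by rewrite /c0; field.
  apply: cvgM.
    apply: cvgM => //; apply: cvgB => //; exact: cvg_cst.
  apply: cvgV; first by rewrite mulrN1 opprK.
  apply: cvgM => //; exact: cvg_cst.
apply: continuous_cvg => //.
exact: continuous_acos.
Unshelve. all: by end_near.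
Qed.
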